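(* Let $X$ be a locally compact space, $Y$ a locally Hausdorff space and $p:X\to Y$ a continuous map all of whose leaves are Hausdorff. Let $L$ be a compact leaf of $p$ which is open in the fiber $p^{-1}(p(L))$. Then for every open neighbourhood $V$ of $L$ in $X$ there exists an open neighbourhood $U\subset V$ of $L$ which is a union of compact leaves of $p$.
   Context: For a continuous map $p:X\to Y$, a leaf of $p$ is a connected component of a fiber $p^{-1}(y)$, $y\in Y$, equipped with the subspace topology from $X$. *)

(* Defs.v *)
From HB Require Import structures.
From mathcomp Require Import all_boot all_order.
From mathcomp Require Import all_classical topology.
Set Implicit Arguments. Unset Strict Implicit. Unset Printing Implicit Defensive.
Local Open Scope classical_set_scope.

Definition open_in {T : topologicalType} (A B : set T) : Prop :=
  B `<=` A /\ exists2 O : set T, open O & B = A `&` O.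

Definition hausdorff_subspace {T : topologicalType} (A : set T) : Prop :=
  forall x y, A x -> A y -> x <> y ->
    exists U V : set T, [/\ open U, open V, U x, V y & A `&` U `&` V = set0].

Definition locally_compact_space (T : topologicalType) : Prop :=
  forall (x : T) (V : set T), nbhs x V ->
    exists K : set T, [/\ nbhs x K, compact K & K `<=` V].

Definition locally_hausdorff_space (T : topologicalType) : Prop :=
  forall y : T, exists U : set T, [/\ open U, U y & hausdorff_subspace U].

Definition leaf {X Y : topologicalType} (p : X -> Y) (L : set X) : Prop :=
  exists (y : Y) (x : X), p x = y /\ L = connected_component (p @^-1` [set y]) x.

(* Main.v *)
Require Import Defs.
From HB Require Import structures.
From mathcomp Require Import all_boot all_order.
From mathcomp Require Import all_classical topology.
From mathcomp Require Import finmap.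
Local Open Scope classical_set_scope.

Section Helpers.
Context {T : topologicalType}.

Lemma sep_compact (N S : set T) z :
  hausdorff_subspace N -> compact S -> S `<=` N -> N z -> ~ S z ->
  exists O : set T, [/\ open O, O z & N `&` O `&` S = set0].
Proof.
move=> hN cS SN Nz nSz.
apply: contrapT => H.
have clS : closure S z.
  move=> B zB; apply: contrapT => nSB; apply: H.
  exists B°; split => //; first exact: open_interior.
  apply/seteqP; split=> // w [[_ Bw] Sw]; apply: nSB.
  by exists w; split => //; apply: interior_subset.
have PF : ProperFilter (within S (nbhs z)) by apply: within_nbhs_proper.
have [c [Sc clc]] := cS _ PF (withinT _ _).
have zc : z <> c by move=> zc; apply: nSz; rewrite zc.
have [U [V [oU oV Uz Vc NUV]]] := hN z c Nz (SN _ Sc) zc.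
have GU : within S (nbhs z) (U `&` S).
  rewrite /within; apply: filterS (open_nbhs_nbhs (conj oU Uz)) => w Uw Sw.
  by split.
have [w [[Uw Sw] Vw]] := clc _ _ GU (open_nbhs_nbhs (conj oV Vc)).
have : (N `&` U `&` V) w by split => //; split => //; apply: SN.
by rewrite NUV.
Qed.

Lemma closure1_sub (N : set T) y z : hausdorff_subspace N -> N y -> N z ->
  closure [set y] z -> z = y.
Proof.
move=> hN Ny Nz cz; apply: contrapT => zy.
have [U [V [oU oV Uz Vy NUV]]] := hN z y Nz Ny zy.
have [w [-> Uy]] := cz U (open_nbhs_nbhs (conj oU Uz)).
have : (N `&` U `&` V) y by [].
by rewrite NUV.
Qed.

Lemma connected_between (C D : set T) :
  connected C -> C `<=` D -> D `<=` closure C -> connected D.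
Proof.
move=> cC CD DC; apply/connectedP => E [E0 DE [s1 s2]].
have CE : C `<=` E false `|` E true by rewrite -DE.
have [CF|CT] := connected_subset (conj s1 s2) CE cC.
- have [e Ee] := E0 true.
  have De : D e by rewrite DE; right.
  have : closure (E false) e by apply: (closureS CF); apply: DC.
  by move=> h; have : (closure (E false) `&` E true) e by []; rewrite s1.
- have [e Ee] := E0 false.
  have De : D e by rewrite DE; left.
  have : closure (E true) e by apply: (closureS CT); apply: DC.
  by move=> h; have : (E false `&` closure (E true)) e by []; rewrite s2.
Qed.

Lemma comp_rel_closed (A : set T) x :
  A `&` closure (connected_component A x) `<=` connected_component A x.
Proof.
move=> w [Aw cw].
have [Ax|nAx] := pselect (A x); last first.
  by move: cw; rewrite connected_component_out // closure0.
apply: (@connected_component_max _ _ (connected_component A x `|` [set w])).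
- by left; apply: connected_component_refl.
- by move=> v [/connected_component_sub //|->].
- apply: (@connected_between (connected_component A x)).
    exact: component_connected.
    by move=> v Cv; left.
  by move=> v [Cv|->] //; apply: subset_closure.
- by right.
Qed.

Lemma my_cover_compact (I : choiceType) (A : set T) (D : set I) (f : I -> set T) :
  compact A -> (forall i, D i -> open (f i)) -> A `<=` cover D f ->
  finite_subset_cover D f A.
Proof.
move=> cA hof Acov; apply: contrapT => nfin.
pose G := filter_from [set D' : {fset I} | {subset D' <= D}]
  (fun D' => A `\` cover [set` D'] f).
assert (FG : Filter G).
  apply: filter_from_filter.
    by exists fset0 => i; rewrite inE.
  move=> D1 D2 h1 h2; exists (D1 `|` D2)%fset.
    by move=> i; rewrite inE => /orP [/h1|/h2].
  move=> z [Az nc]; split; split => // -[i Di fz]; apply: nc.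
    by exists i => //=; rewrite inE Di.
  by exists i => //=; rewrite inE Di orbT.
assert (PG : ProperFilter G).
  apply: filter_from_proper => // D1 h1; apply: contrapT => ne; apply: nfin.
  exists D1 => // z Az; apply: contrapT => nc; by apply: ne; exists z; split.
have GA : G A.
  by exists fset0; [move=> i; rewrite inE|move=> ?; case].
have [a [Aa cla]] := cA G PG GA.
have [i Di fia] := Acov a Aa.
have Gi : G (A `\` f i).
  exists [fset i]%fset; first by move=> j; rewrite inE => /eqP ->; apply/mem_set.
  move=> z [Az nc].
  by split => // fz; apply: nc; exists i => //=; rewrite inE.
have [w [[_ nfw] fw]] := cla _ _ Gi (open_nbhs_nbhs (conj (hof i Di) fia)).
exact: nfw.
Qed.

End Helpers.

Theorem theorem3p3 (X Y : topologicalType) (p : X -> Y) :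
  locally_compact_space X ->
  locally_hausdorff_space Y ->
  continuous p ->
  (forall L : set X, leaf p L -> hausdorff_subspace L) ->
  forall L : set X, leaf p L -> compact L ->
  open_in (p @^-1` (p @` L)) L ->
  forall V : set X, open V -> L `<=` V ->
  exists U : set X, [/\ open U, L `<=` U, U `<=` V &
    exists F : set (set X),
      (forall L', F L' -> leaf p L' /\ compact L') /\
      U = \bigcup_(L' in F) L'].
Proof.
move=> lc lh pc leafH L hL cL [_ [O oO LE]] V oV LV.
have [y [x0 [px0 Ldef]]] := hL.
have Lx0 : L x0 by rewrite Ldef; apply: connected_component_refl.
have pL : forall l, L l -> p l = y.
  by move=> l; rewrite Ldef => /connected_component_sub.
have LO : L `<=` O by move=> l; rewrite LE => -[].
have OL : forall k, O k -> p k = y -> L k.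
  move=> k Ok pk; rewrite LE; split => //.
  by exists x0 => //; rewrite pk.
have [N [oN Ny hN]] := lh y.
have popen : forall D, open D -> open (p @^-1` D).
  by move=> D oD; apply: open_comp => // z _; apply: pc.
set A := O `&` V `&` p @^-1` N.
have oA : open A by apply: openI; [apply: openI|apply: popen].
have LA : L `<=` A by move=> l Ll; split; [split; [apply: LO|apply: LV]|rewrite /= pL].
have hK : forall x, exists K : set X,
    [/\ compact K, K `<=` A & A x -> nbhs x K].
  move=> x; have [Ax|nAx] := pselect (A x).
    have [K [xK cK KA]] := lc x A (open_nbhs_nbhs (conj oA Ax)).
    by exists K; split.
  by exists set0; split => //; exact: compact0.
have [Kf hKf] := choice hK.
have [D' D'L LD'] : finite_subset_cover L (fun x => (Kf x)°) L.
  apply: my_cover_compact => //.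
    by move=> i _; apply: open_interior.
  move=> l Ll; exists l => //; have [_ _ h] := hKf l; exact: h (LA _ Ll).
set W := \bigcup_(i in [set` D']) (Kf i)°.
set K := \bigcup_(i in [set` D']) Kf i.
have oW : open W by apply: bigcup_open => i _; apply: open_interior.
have LW : L `<=` W by [].
have WK : W `<=` K by move=> w [i Di Kw]; exists i => //; apply: interior_subset.
have cK : compact K.
  by rewrite /K bigcup_fset; apply: bigsetU_compact => i _; have [] := hKf i.
have KA : K `<=` A by move=> k [i _ Kk]; have [_ h _] := hKf i; apply: h.
set C := K `&` ~` W.
have cC : compact C by apply: compact_closedI => //; rewrite closedC.
have cpC : compact (p @` C).
  by apply: continuous_compact => //; apply: continuous_subspaceT.
have pCN : p @` C `<=` N by move=> _ [c [Kc _] <-]; have [_ ] := KA _ Kc.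
have npCy : ~ (p @` C) y.
  move=> [c [Kc nWc] pc']; apply: nWc; apply: LW; apply: OL => //.
  by have [[]] := KA _ Kc.
have [O2 [oO2 O2y NO2]] := @sep_compact _ _ _ _ hN cpC pCN Ny npCy.
set U0 := W `&` p @^-1` (N `&` O2).
have key : forall x', U0 x' ->
    connected_component (p @^-1` [set p x']) x' `<=` W /\
    compact (connected_component (p @^-1` [set p x']) x').
  move=> x' [Wx' [Nx' O2x']].
  set y' := p x'; set F' := p @^-1` [set y'].
  set L' := connected_component F' x'.
  have L'x' : L' x' by apply: connected_component_refl.
  have pL' : forall l, L' l -> p l = y' by move=> l /connected_component_sub.
  have KF : forall k, K k -> p k = y' -> W k.
    move=> k Kk pk; apply: contrapT => nWk.
    have : (N `&` O2 `&` p @` C) y' by split; [split|exists k].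
    by rewrite NO2.
  set S := L' `&` K.
  have SE : S = K `&` (p @^-1` closure [set y'] `&` closure L').
    apply/seteqP; split.
    - move=> l [L'l Kl]; split=> //; split.
        by rewrite /= (pL' _ L'l); apply: subset_closure.
      exact: subset_closure.
    - move=> k [Kk [ck cLk]].
      have [_ Npk] := KA _ Kk.
      have pk : p k = y' by exact: (@closure1_sub _ N y' (p k) hN Nx' Npk ck).
      split=> //; apply: comp_rel_closed; split => //.
  have cS : compact S.
    rewrite SE; apply: compact_closedI => //; apply: closedI; last first.
      exact: closed_closure.
    rewrite -openC preimage_setC; apply: popen; rewrite openC.
    exact: closed_closure.
  have hL' : hausdorff_subspace L' by apply: leafH; exists y', x'.
  have L'W : L' `<=` W.
    have cL' := @component_connected _ F' x'.
    pose G := \bigcup_(Q in [set Q | open Q /\ L' `&` Q `&` S = set0]) Q.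
    have oG : open G by apply: bigcup_open => Q [].
    have E : L' `&` W = L'.
      apply: cL'.
      - by exists x'; split.
      - by exists W.
      - exists (~` G); first by rewrite closedC.
        apply/seteqP; split.
        + move=> l [L'l Wl]; split=> // -[Q [oQ QS] Ql].
          have : (L' `&` Q `&` S) l by split; [split|split; [|apply: WK]].
          by rewrite QS.
        + move=> l [L'l nGl]; split=> //; apply: contrapT => nWl.
          have nSl : ~ S l.
            by move=> [_ Kl]; apply: nWl; apply: KF => //; apply: pL'.
          have [Q [oQ Ql QS]] :=
            @sep_compact _ _ _ _ hL' cS (@subIsetl _ L' K) L'l nSl.
          by apply: nGl; exists Q.
    by move=> l L'l; move: L'l; rewrite -E => -[].
  split => //.
  have -> : L' = S => //.
  apply/seteqP; split; last by move=> l [].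
  by move=> l Ll; split=> //; apply: WK; apply: L'W.
exists U0; split.
- by apply: openI => //; apply: popen; apply: openI.
- by move=> l Ll; split; [apply: LW|rewrite /= pL].
- by move=> u [Wu _]; have [[_ ]] := KA _ (WK _ Wu).
exists [set L' | [/\ leaf p L', compact L' & L' `<=` U0]]; split.
  by move=> L' [].
apply/seteqP; split.
- move=> x' Ux'; have [kW kc] := key x' Ux'.
  exists (connected_component (p @^-1` [set p x']) x'); last first.
    exact: connected_component_refl.
  split => //; first by exists (p x'), x'.
  move=> l Cl; split; first exact: kW.
  have := connected_component_sub Cl => /= ->.
  by have [_] := Ux'.
- by move=> x' [L' [_ _ h] Lx']; apply: h.
Qed.
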